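(* Let $\alpha>2$, and for $s_1,s_2>0$ define \[ f(s_1,s_2)=\frac{\int_0^\infty e^{-(s_1+s_2)x^{2/\alpha}}\frac{dx}{1+x}}{s_1\int_0^\infty x^{2/\alpha}e^{-(s_1+s_2)x^{2/\alpha}}\frac{dx}{1+x}}. \] Then the function $s\mapsto f(s,s)$ is monotonically decreasing on $(0,\infty)$. *)

(* Defs.v *)
From Stdlib Require Import Reals.
From Coquelicot Require Import Coquelicot.
Open Scope R_scope.

(* x^a for x >= 0 and a > 0, with the convention 0^a = 0
   (Stdlib's Rpower 0 a = 1 would be wrong at the single point 0). *)
Definition rpow (x a : R) : R := if Rlt_dec 0 x then Rpower x a else 0.

Definition I0 (alpha t : R) : R :=
  RInt_gen (fun x => exp (- t * rpow x (2 / alpha)) / (1 + x))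
           (at_point 0) (Rbar_locally p_infty).

Definition I1 (alpha t : R) : R :=
  RInt_gen (fun x => rpow x (2 / alpha) * exp (- t * rpow x (2 / alpha)) / (1 + x))
           (at_point 0) (Rbar_locally p_infty).

Definition fratio (alpha s1 s2 : R) : R :=
  I0 alpha (s1 + s2) / (s1 * I1 alpha (s1 + s2)).

(* Main.v *)
Require Import Defs.
From Stdlib Require Import Reals Lra.
From Coquelicot Require Import Coquelicot.
Open Scope R_scope.

Lemma rpow_pos x c : 0 < x -> rpow x c = exp (c * ln x).
Proof. intros H; unfold rpow; destruct (Rlt_dec 0 x); [reflexivity|lra]. Qed.

Lemma rpow_nonpos x c : x <= 0 -> rpow x c = 0.
Proof. intros H; unfold rpow; destruct (Rlt_dec 0 x); [lra|reflexivity]. Qed.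

Lemma rpow_ge0 x c : 0 <= rpow x c.
Proof. unfold rpow; destruct (Rlt_dec 0 x); [unfold Rpower; apply Rlt_le, exp_pos|lra]. Qed.

Lemma rpow_gt0 x c : 0 < x -> 0 < rpow x c.
Proof. intros; rewrite rpow_pos; auto; apply exp_pos. Qed.

Lemma rpow_lt x y c : 0 < c -> 0 <= x -> x < y -> rpow x c < rpow y c.
Proof.
  intros Hc Hx Hxy. destruct (Req_dec x 0) as [->|Hx0].
  - rewrite rpow_nonpos by lra. apply rpow_gt0; lra.
  - rewrite !rpow_pos by lra. apply exp_increasing.
    apply Rmult_lt_compat_l; auto. apply ln_increasing; lra.
Qed.

Lemma rpow_ge1 y c : 0 < c -> 1 <= y -> 1 <= rpow y c.
Proof.
  intros Hc Hy. rewrite rpow_pos by lra. rewrite <- exp_0.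
  destruct (Req_dec y 1) as [->|H]. rewrite ln_1, Rmult_0_r; lra.
  apply Rlt_le, exp_increasing. apply Rmult_lt_0_compat; auto.
  rewrite <- ln_1; apply ln_increasing; lra.
Qed.

Lemma cont_rpow c y : 0 < c -> 0 <= y -> continuous (fun x => rpow x c) y.
Proof.
  intros Hc Hy. destruct (Req_dec y 0) as [->|Hy0].
  - intros P [eps HP]. 
    set (d := exp (ln eps / c)).
    assert (Hd : 0 < d) by apply exp_pos.
    exists (mkposreal d Hd). intros x Hx. apply HP.
    change (Rabs (rpow x c - rpow 0 c) < eps). rewrite (rpow_nonpos 0) by lra.
    change (Rabs (x - 0) < d) in Hx.
    rewrite Rminus_0_r in *. rewrite Rabs_pos_eq by apply rpow_ge0.
    destruct (Rle_dec x 0). rewrite rpow_nonpos by lra. apply cond_pos.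
    rewrite rpow_pos by lra. rewrite Rabs_pos_eq in Hx by lra.
    rewrite <- (exp_ln eps) by apply cond_pos. apply exp_increasing.
    assert (ln x < ln d) by (apply ln_increasing; lra).
    unfold d in H; rewrite ln_exp in H.
    apply Rmult_lt_compat_l with (r := c) in H; auto.
    replace (c * (ln eps / c)) with (ln eps) in H by (field; lra). exact H.
  - apply continuous_ext_loc with (g := fun x => exp (c * ln x)).
    + assert (Hy' : 0 < y) by lra.
      exists (mkposreal y Hy'). intros x Hx. 
      change (Rabs (x - y) < y) in Hx. apply Rabs_def2 in Hx.
      rewrite rpow_pos by lra. reflexivity.
    + apply continuous_exp_comp. apply (continuous_scal_r c (fun x => ln x)).
      apply continuous_ln; lra.
Qed.

Definition IR (f : R -> R) (l : R) :=
  (forall b, 0 <= b -> ex_RInt f 0 b) /\ is_lim (fun b => RInt f 0 b) p_infty l.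

Lemma IR_gen f l : IR f l -> is_RInt_gen f (at_point 0) (Rbar_locally p_infty) l.
Proof.
  intros [Hex Hlim]. apply is_lim_spec in Hlim.
  intros P [eps HP]. destruct (Hlim eps) as [M HM].
  exists (fun x => x = 0) (fun b => Rmax M 0 < b).
  - reflexivity.
  - exists (Rmax M 0). auto.
  - intros a b Ha Hb. subst a. simpl.
    exists (RInt f 0 b). split.
    + apply (RInt_correct (V:=R_CompleteNormedModule)), Hex. generalize (Rmax_r M 0); lra.
    + apply HP. apply HM. generalize (Rmax_l M 0); lra.
Qed.

Lemma IR_ext f g l : (forall y, 0 <= y -> f y = g y) -> IR f l -> IR g l.
Proof.
  intros He [Hex Hlim]. split.
  - intros b Hb. apply ex_RInt_ext with f; auto.
    intros x Hx. apply He. rewrite Rmin_left in Hx by lra. lra.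
  - apply is_lim_ext_loc with (fun b => RInt f 0 b); auto.
    exists 0. intros b Hb. apply RInt_ext. intros x Hx.
    apply He. rewrite Rmin_left in Hx by lra. lra.
Qed.

Lemma IR_lin f g a b lf lg : IR f lf -> IR g lg ->
  IR (fun y => a * f y + b * g y) (a * lf + b * lg).
Proof.
  intros [Hf Lf] [Hg Lg]. split.
  - intros x Hx. apply (ex_RInt_plus (fun y => a * f y) (fun y => b * g y)).
    apply (ex_RInt_scal f); auto. apply (ex_RInt_scal g); auto.
  - apply is_lim_ext_loc with (fun x => a * RInt f 0 x + b * RInt g 0 x).
    + exists 0. intros x Hx.
      assert (Ea : ex_RInt (fun y => a * f y) 0 x) by (apply (ex_RInt_scal f); apply Hf; lra).
      assert (Eb : ex_RInt (fun y => b * g y) 0 x) by (apply (ex_RInt_scal g); apply Hg; lra).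
      transitivity (RInt (fun y => a * f y) 0 x + RInt (fun y => b * g y) 0 x).
      f_equal; symmetry; apply (RInt_scal (V:=R_CompleteNormedModule)); [apply Hf|apply Hg]; lra.
      symmetry; apply (RInt_plus (V:=R_CompleteNormedModule)); auto.
    + eapply is_lim_plus. apply is_lim_scal_l; eauto. apply is_lim_scal_l; eauto.
      reflexivity.
Qed.

Lemma IR_lower f l b : IR f l -> (forall y, 0 <= y -> 0 <= f y) -> 0 <= b -> RInt f 0 b <= l.
Proof.
  intros [Hex Hlim] Hp Hb.
  assert (H := is_lim_le_loc (fun _ => RInt f 0 b) (fun x => RInt f 0 x) p_infty (RInt f 0 b) l).
  simpl in H. apply H; clear H.
  - exists b. intros x Hx.
    assert (E1 : ex_RInt f 0 b) by (apply Hex; lra).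
    assert (E2 : ex_RInt f b x) by (apply (ex_RInt_Chasles_2 (V:=R_CompleteNormedModule)) with 0; [lra|apply Hex; lra]).
    rewrite <- (RInt_Chasles (V:=R_CompleteNormedModule) f 0 b x E1 E2).
    change (RInt f 0 b <= RInt f 0 b + RInt f b x).
    assert (0 <= RInt f b x). apply RInt_ge_0. lra. exact E2. intros; apply Hp; lra.
    lra.
  - apply is_lim_const.
  - exact Hlim.
Qed.

Lemma IR_scale f g lam l : 0 < lam ->
  (forall b, 0 <= b -> ex_RInt f 0 b) ->
  (forall y, 0 <= y -> g y = lam * f (lam * y)) -> IR g l -> IR f l.
Proof.
  intros Hl Hf He [Hg Lg]. split; auto.
  apply is_lim_spec in Lg. apply is_lim_spec. intros eps.
  destruct (Lg eps) as [M HM]. exists (lam * Rmax M 0). intros b Hb.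
  assert (HMb : Rmax M 0 < b / lam).
  { apply Rmult_lt_reg_l with lam; auto. field_simplify; lra. }
  assert (E : RInt f 0 b = RInt g 0 (b / lam)).
  { rewrite (RInt_ext g (fun y => scal lam (f (lam * y + 0)))).
    symmetry. etransitivity. apply (RInt_comp_lin (V:=R_CompleteNormedModule)).
    replace (lam * 0 + 0) with 0 by ring. replace (lam * (b/lam) + 0) with b by (field; lra).
    apply Hf. generalize (Rmax_r M 0); nra.
    f_equal; field; lra.
    intros x Hx. rewrite Rmin_left in Hx. rewrite He by lra. rewrite Rplus_0_r. reflexivity.
    generalize (Rmax_r M 0); lra. }
  rewrite E. apply HM. generalize (Rmax_l M 0); lra.
Qed.

Lemma IR_exist f M : (forall b, 0 <= b -> ex_RInt f 0 b) ->
  (forall y, 0 <= y -> 0 <= f y) -> (forall b, 0 <= b -> RInt f 0 b <= M) ->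
  exists l, IR f l.
Proof.
  intros Hex Hp Hb.
  set (E := fun v => exists b, 0 <= b /\ v = RInt f 0 b).
  assert (Hbd : bound E). { exists M. intros v [b [H1 ->]]. auto. }
  assert (Hne : exists v, E v). { exists (RInt f 0 0). exists 0. split; lra. }
  destruct (completeness E Hbd Hne) as [L [HL1 HL2]].
  assert (Mono : forall a b, 0 <= a <= b -> RInt f 0 a <= RInt f 0 b).
  { intros a b Hab.
    assert (E1 : ex_RInt f 0 a) by (apply Hex; lra).
    assert (E2 : ex_RInt f a b) by (apply (ex_RInt_Chasles_2 (V:=R_CompleteNormedModule)) with 0; [lra|apply Hex; lra]).
    rewrite <- (RInt_Chasles (V:=R_CompleteNormedModule) f 0 a b E1 E2).
    change (RInt f 0 a <= RInt f 0 a + RInt f a b).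
    assert (0 <= RInt f a b). apply RInt_ge_0. lra. exact E2. intros; apply Hp; lra. lra. }
  exists L. split; auto. apply is_lim_spec. intros eps.
  assert (exists b, 0 <= b /\ L - eps < RInt f 0 b).
  { apply Classical_Prop.NNPP. intros Hn.
    assert (L <= L - eps). apply HL2. intros v [b [H1 ->]].
    apply Rnot_lt_le. intros Hc. apply Hn. exists b; auto.
    generalize (cond_pos eps); lra. }
  destruct H as [b0 [Hb0 Hlt]]. exists b0. intros x Hx.
  assert (RInt f 0 x <= L). { apply HL1. exists x; split; auto; lra. }
  assert (RInt f 0 b0 <= RInt f 0 x) by (apply Mono; lra).
  apply Rabs_def1; lra.
Qed.

Definition dF c y := exp (- exp (c * ln y)) * (exp (c * ln y) * (c / y)).

Lemma dF_derive c y : 0 < y -> is_derive (fun y => - exp (- exp (c * ln y))) y (dF c y).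
Proof. intros Hy. auto_derive. lra. unfold dF. field. lra. Qed.

Lemma dF_cont c y : 0 < y -> continuous (dF c) y.
Proof.
  intros Hy. unfold dF.
  apply (continuous_mult (fun y => exp (- exp (c * ln y)))).
  apply continuous_exp_comp. apply (continuous_opp (fun y => exp (c * ln y))).
  apply continuous_exp_comp. apply (continuous_scal_r c (fun y => ln y)). apply continuous_ln; lra.
  apply (continuous_mult (fun y => exp (c * ln y))).
  apply continuous_exp_comp. apply (continuous_scal_r c (fun y => ln y)). apply continuous_ln; lra.
  apply (continuous_mult (fun _ => c)). apply continuous_const.
  apply continuous_Rinv_comp. apply continuous_id. lra.
Qed.

Lemma bound_lemma c mu f : 0 < c -> 0 < mu ->
  (forall b, 0 <= b -> ex_RInt f 0 b) ->
  (forall y, 0 <= y -> 0 <= f y) ->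
  (forall y, 0 <= y <= 1 -> f y <= / mu) ->
  (forall y, 1 <= y -> f y <= / c * dF c y) ->
  forall b, 0 <= b -> RInt f 0 b <= / mu + / c.
Proof.
  intros Hc Hmu Hex Hp H01 H1 b Hb.
  assert (Hc' : 0 < / c) by (apply Rinv_0_lt_compat; lra).
  assert (Hm' : 0 < / mu) by (apply Rinv_0_lt_compat; lra).
  assert (Small : forall b, 0 <= b <= 1 -> RInt f 0 b <= / mu).
  { intros b' Hb'. apply Rle_trans with (RInt (fun _ => / mu) 0 b').
    apply RInt_le. lra. apply Hex; lra. apply ex_RInt_const.
    intros; apply H01; lra.
    rewrite RInt_const. change ((b' - 0) * / mu <= / mu). nra. }
  destruct (Rle_dec b 1). apply Rle_trans with (/ mu). apply Small; lra. lra.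
  assert (E1 : ex_RInt f 0 1) by (apply Hex; lra).
  assert (E2 : ex_RInt f 1 b) by (apply (ex_RInt_Chasles_2 (V:=R_CompleteNormedModule)) with 0; [lra|apply Hex; lra]).
  rewrite <- (RInt_Chasles (V:=R_CompleteNormedModule) f 0 1 b E1 E2).
  change (RInt f 0 1 + RInt f 1 b <= / mu + / c).
  assert (RInt f 0 1 <= / mu) by (apply Small; lra).
  assert (ID : is_RInt (dF c) 1 b (minus (- exp (- exp (c * ln b))) (- exp (- exp (c * ln 1))))).
  { apply (is_RInt_derive (fun y => - exp (- exp (c * ln y)))).
    intros x Hx. rewrite Rmin_left, Rmax_right in Hx by lra. apply dF_derive; lra.
    intros x Hx. rewrite Rmin_left, Rmax_right in Hx by lra. apply dF_cont; lra. }
  assert (RInt f 1 b <= / c).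
  { apply Rle_trans with (RInt (fun y => / c * dF c y) 1 b).
    apply RInt_le. lra. exact E2. apply (ex_RInt_scal (dF c)). eexists; exact ID.
    intros; apply H1; lra.
    rewrite (RInt_scal (V:=R_CompleteNormedModule) (dF c)).
    rewrite (is_RInt_unique _ _ _ _ ID).
    change (/ c * ((- exp (- exp (c * ln b))) - (- exp (- exp (c * ln 1)))) <= / c).
    rewrite ln_1, Rmult_0_r, exp_0.
    assert (0 < exp (- exp (c * ln b))) by apply exp_pos.
    assert (exp (- (1)) < exp 0) by (apply exp_increasing; lra). rewrite exp_0 in *.
    apply Rle_trans with (/ c * 1); [apply Rmult_le_compat_l; lra | lra].
    eexists; exact ID. }
  lra.
Qed.

Definition Bint c mu y := exp (- rpow y c) / (mu + y).
Definition Aint c mu y := rpow y c * exp (- rpow y c) / (mu + y).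

Lemma cont_B c mu y : 0 < c -> 0 < mu -> 0 <= y -> continuous (Bint c mu) y.
Proof.
  intros Hc Hm Hy. unfold Bint, Rdiv.
  apply (continuous_mult (fun y => exp (- rpow y c))).
  apply continuous_exp_comp. apply (continuous_opp (fun y => rpow y c)). apply cont_rpow; auto.
  apply continuous_Rinv_comp. apply (continuous_plus (fun _ => mu) (fun y => y)).
  apply continuous_const. apply continuous_id. lra.
Qed.

Lemma cont_A c mu y : 0 < c -> 0 < mu -> 0 <= y -> continuous (Aint c mu) y.
Proof.
  intros Hc Hm Hy. unfold Aint, Rdiv.
  apply (continuous_mult (fun y => rpow y c * exp (- rpow y c))).
  apply (continuous_mult (fun y => rpow y c)). apply cont_rpow; auto.
  apply continuous_exp_comp. apply (continuous_opp (fun y => rpow y c)). apply cont_rpow; auto.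
  apply continuous_Rinv_comp. apply (continuous_plus (fun _ => mu) (fun y => y)).
  apply continuous_const. apply continuous_id. lra.
Qed.

Lemma exRInt_of_cont (f : R -> R) : (forall y, 0 <= y -> continuous f y) -> forall b, 0 <= b -> ex_RInt f 0 b.
Proof.
  intros H b Hb. apply (ex_RInt_continuous (V:=R_CompleteNormedModule)). intros z Hz.
  rewrite Rmin_left in Hz by lra. apply H; lra.
Qed.

Lemma texp_le1 t : 0 <= t -> t * exp (- t) <= 1.
Proof.
  intros Ht. assert (0 < exp t) by apply exp_pos.
  assert (t <= exp t).
  { destruct (Req_dec t 0). subst; lra. generalize (exp_ineq1 t H0); lra. }
  rewrite exp_Ropp. apply Rmult_le_reg_r with (exp t); auto.
  field_simplify; lra.
Qed.

Lemma B_le_A c mu y : 0 < c -> 0 < mu -> 1 <= y -> Bint c mu y <= Aint c mu y.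
Proof.
  intros Hc Hm Hy. unfold Aint, Bint, Rdiv.
  assert (1 <= rpow y c) by (apply rpow_ge1; lra).
  assert (0 < exp (- rpow y c)) by apply exp_pos.
  assert (0 < / (mu + y)) by (apply Rinv_0_lt_compat; lra).
  apply Rmult_le_compat_r; [lra|]. nra.
Qed.

Lemma A_le_dF c mu y : 0 < c -> 0 < mu -> 1 <= y -> Aint c mu y <= / c * dF c y.
Proof.
  intros Hc Hm Hy. unfold Aint, dF. rewrite rpow_pos by lra.
  set (P := exp (c * ln y)).
  assert (0 < P) by apply exp_pos.
  assert (0 < exp (- P)) by apply exp_pos.
  replace (/ c * (exp (- P) * (P * (c / y)))) with (P * exp (- P) / y) by (field; lra).
  unfold Rdiv. apply Rmult_le_compat_l. nra.
  apply Rinv_le_contravar; lra.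
Qed.

Lemma A_exist c mu : 0 < c -> 0 < mu -> exists l, IR (Aint c mu) l.
Proof.
  intros Hc Hm. apply IR_exist with (/ mu + / c).
  apply exRInt_of_cont; intros; apply cont_A; auto.
  intros y Hy. unfold Aint. assert (0 < exp (- rpow y c)) by apply exp_pos.
  generalize (rpow_ge0 y c); intros. apply Rmult_le_pos. nra. apply Rlt_le, Rinv_0_lt_compat; lra.
  apply bound_lemma; auto.
  apply exRInt_of_cont; intros; apply cont_A; auto.
  intros y Hy. unfold Aint. assert (0 < exp (- rpow y c)) by apply exp_pos.
  generalize (rpow_ge0 y c); intros. apply Rmult_le_pos. nra. apply Rlt_le, Rinv_0_lt_compat; lra.
  intros y Hy. unfold Aint, Rdiv.
  assert (rpow y c * exp (- rpow y c) <= 1) by (apply texp_le1, rpow_ge0).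
  assert (0 <= rpow y c * exp (- rpow y c)) by (generalize (rpow_ge0 y c) (exp_pos (- rpow y c)); nra).
  apply Rle_trans with (1 * / (mu + y)).
  apply Rmult_le_compat_r. apply Rlt_le, Rinv_0_lt_compat; lra. lra.
  rewrite Rmult_1_l. apply Rinv_le_contravar; lra.
  intros; apply A_le_dF; auto.
Qed.

Lemma B_exist c mu : 0 < c -> 0 < mu -> exists l, IR (Bint c mu) l.
Proof.
  intros Hc Hm. apply IR_exist with (/ mu + / c).
  apply exRInt_of_cont; intros; apply cont_B; auto.
  intros y Hy. unfold Bint. assert (0 < exp (- rpow y c)) by apply exp_pos.
  apply Rmult_le_pos. lra. apply Rlt_le, Rinv_0_lt_compat; lra.
  apply bound_lemma; auto.
  apply exRInt_of_cont; intros; apply cont_B; auto.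
  intros y Hy. unfold Bint. assert (0 < exp (- rpow y c)) by apply exp_pos.
  apply Rmult_le_pos. lra. apply Rlt_le, Rinv_0_lt_compat; lra.
  intros y Hy. unfold Bint, Rdiv.
  assert (exp (- rpow y c) <= 1).
  { rewrite <- exp_0. destruct (Req_dec (rpow y c) 0) as [E|E]. rewrite E, Ropp_0; lra.
    apply Rlt_le, exp_increasing. generalize (rpow_ge0 y c); lra. }
  apply Rle_trans with (1 * / (mu + y)).
  apply Rmult_le_compat_r. apply Rlt_le, Rinv_0_lt_compat; lra. lra.
  rewrite Rmult_1_l. apply Rinv_le_contravar; lra.
  intros; eapply Rle_trans. apply B_le_A; auto. apply A_le_dF; auto.
Qed.

Lemma cont_lin (f g : R -> R) a b y : continuous f y -> continuous g y ->
  continuous (fun y => a * f y + b * g y) y.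
Proof.
  intros Hf Hg. apply (continuous_plus (fun y => a * f y) (fun y => b * g y)).
  apply (continuous_scal_r a f); auto. apply (continuous_scal_r b g); auto.
Qed.

Lemma IR_pos_strict f l a : IR f l -> (forall y, 0 <= y -> 0 <= f y) ->
  (forall y, 0 <= y -> continuous f y) -> 0 <= a ->
  (forall y, a < y < a + 1 -> 0 < f y) -> 0 < l.
Proof.
  intros HI Hp Hc Ha Hpos.
  apply Rlt_le_trans with (RInt f 0 (a + 1)); [| apply IR_lower; auto; lra].
  destruct HI as [Hex _].
  assert (E1 : ex_RInt f 0 a) by (apply Hex; lra).
  assert (E2 : ex_RInt f a (a+1)) by (apply (ex_RInt_Chasles_2 (V:=R_CompleteNormedModule)) with 0; [lra|apply Hex; lra]).
  rewrite <- (RInt_Chasles (V:=R_CompleteNormedModule) f 0 a (a+1) E1 E2).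
  change (0 < RInt f 0 a + RInt f a (a+1)).
  assert (0 <= RInt f 0 a) by (apply RInt_ge_0; auto; intros; apply Hp; lra).
  assert (RInt (fun _ => 0) a (a+1) < RInt f a (a+1)).
  { apply RInt_lt. lra. intros; apply Hc; lra. intros; apply continuous_const. auto. }
  rewrite RInt_const in H0. change ((a + 1 - a) * 0 < RInt f a (a+1)) in H0. lra.
Qed.

Lemma Bint_pos c mu y : 0 < mu -> 0 <= y -> 0 < Bint c mu y.
Proof. intros. unfold Bint. apply Rdiv_lt_0_compat. apply exp_pos. lra. Qed.

Lemma Aint_pos c mu y : 0 < c -> 0 < mu -> 0 < y -> 0 < Aint c mu y.
Proof. intros. unfold Aint. apply Rdiv_lt_0_compat. apply Rmult_lt_0_compat. apply rpow_gt0; auto. apply exp_pos. lra. Qed.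

Lemma key c mu nu a1 b1 a2 b2 : 0 < c -> 0 < mu -> mu < nu ->
  IR (Aint c mu) a1 -> IR (Bint c mu) b1 -> IR (Aint c nu) a2 -> IR (Bint c nu) b2 ->
  0 < a1 /\ 0 < b1 /\ 0 < a2 /\ 0 < b2 /\ a1 * b2 < a2 * b1.
Proof.
  intros Hc Hmu Hmn HA1 HB1 HA2 HB2.
  assert (Pb1 : 0 < b1).
  { apply IR_pos_strict with (Bint c mu) 0; auto. intros; apply Rlt_le, Bint_pos; auto.
    intros; apply cont_B; auto. lra. intros; apply Bint_pos; lra. }
  assert (Pb2 : 0 < b2).
  { apply IR_pos_strict with (Bint c nu) 0; auto. intros; apply Rlt_le, Bint_pos; lra.
    intros; apply cont_B; auto; lra. lra. intros; apply Bint_pos; lra. }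
  assert (Pa1 : 0 < a1).
  { apply IR_pos_strict with (Aint c mu) 0; auto.
    intros y Hy. destruct (Req_dec y 0). subst. unfold Aint. rewrite rpow_nonpos by lra. lra.
    apply Rlt_le, Aint_pos; auto; lra.
    intros; apply cont_A; auto. lra. intros; apply Aint_pos; lra. }
  assert (Pa2 : 0 < a2).
  { apply IR_pos_strict with (Aint c nu) 0; auto.
    intros y Hy. destruct (Req_dec y 0). subst. unfold Aint. rewrite rpow_nonpos by lra. lra.
    apply Rlt_le, Aint_pos; auto; lra.
    intros; apply cont_A; auto; lra. lra. intros; apply Aint_pos; lra. }
  do 4 (split; auto).
  set (m := a1 / b1).
  assert (Hm : 0 < m) by (apply Rdiv_lt_0_compat; auto).
  set (y0 := exp (ln m / c)).
  assert (Hy0 : 0 < y0) by apply exp_pos.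
  assert (Py0 : rpow y0 c = m).
  { rewrite rpow_pos by auto. unfold y0. rewrite ln_exp.
    replace (c * (ln m / c)) with (ln m) by (field; lra). apply exp_ln; auto. }
  set (K := (mu + y0) / (nu + y0)).
  assert (Gnu := IR_lin _ _ 1 (- m) _ _ HA2 HB2).
  assert (Gmu := IR_lin _ _ 1 (- m) _ _ HA1 HB1).
  assert (G := IR_lin _ _ 1 (- K) _ _ Gnu Gmu).
  set (g := fun y => 1 * (1 * Aint c nu y + - m * Bint c nu y) + - K * (1 * Aint c mu y + - m * Bint c mu y)) in G.
  assert (Hg : forall y, 0 <= y -> g y =
     (rpow y c - m) * (y - y0) * ((nu - mu) * exp (- rpow y c) / ((nu + y) * (mu + y) * (nu + y0)))).
  { intros y Hy. unfold g, Aint, Bint, K. field. lra. }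
  assert (Sg : forall y, 0 <= y -> 0 <= (rpow y c - m) * (y - y0) /\ (y0 < y -> 0 < (rpow y c - m) * (y - y0))).
  { intros y Hy. rewrite <- Py0. destruct (Rtotal_order y y0) as [H|[H|H]].
    - assert (rpow y c < rpow y0 c) by (apply rpow_lt; auto). split; [nra|lra].
    - subst. split; [lra|lra].
    - assert (rpow y0 c < rpow y c) by (apply rpow_lt; auto; lra). split; nra. }
  assert (Pos : forall y, 0 <= y -> 0 < (nu - mu) * exp (- rpow y c) / ((nu + y) * (mu + y) * (nu + y0))).
  { intros y Hy. apply Rdiv_lt_0_compat. apply Rmult_lt_0_compat. lra. apply exp_pos.
    apply Rmult_lt_0_compat. apply Rmult_lt_0_compat; lra. lra. }
  assert (Lpos : 0 < 1 * (1 * a2 + - m * b2) + - K * (1 * a1 + - m * b1)).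
  { apply IR_pos_strict with g y0; auto.
    - intros y Hy. rewrite Hg by auto. apply Rmult_le_pos. apply Sg; auto. apply Rlt_le, Pos; auto.
    - intros y Hy. unfold g. apply cont_lin; apply cont_lin.
      apply cont_A; lra. apply cont_B; lra. apply cont_A; lra. apply cont_B; lra.
    - lra.
    - intros y Hy. rewrite Hg by lra. apply Rmult_lt_0_compat. apply Sg; lra. apply Pos; lra. }
  assert (E : 1 * a1 + - m * b1 = 0) by (unfold m; field; lra).
  rewrite E in Lpos. unfold m in Lpos.
  assert (a2 - a1 / b1 * b2 > 0) by lra.
  apply Rmult_lt_reg_r with (/ b1). apply Rinv_0_lt_compat; auto.
  replace (a1 * b2 * / b1) with (a1 / b1 * b2) by (field; lra).
  replace (a2 * b1 * / b1) with a2 by (field; lra). lra.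
Qed.

Lemma rpow_scale lam y c : 0 < lam -> 0 <= y -> rpow (lam * y) c = rpow lam c * rpow y c.
Proof.
  intros Hl Hy. destruct (Req_dec y 0).
  - subst. rewrite Rmult_0_r, !(rpow_nonpos 0) by lra. ring.
  - rewrite !rpow_pos by nra. rewrite ln_mult by lra. rewrite <- exp_plus. f_equal; ring.
Qed.

Lemma repr alpha t a b : 2 < alpha -> 0 < t ->
  IR (Aint (2 / alpha) (exp (ln (t + t) / (2 / alpha)))) a ->
  IR (Bint (2 / alpha) (exp (ln (t + t) / (2 / alpha)))) b -> 0 < a ->
  fratio alpha t t = 2 * b / a.
Proof.
  intros Hal Ht HA HB Ha.
  set (c := 2 / alpha) in *. set (u := t + t) in *.
  assert (Hc : 0 < c) by (unfold c; apply Rdiv_lt_0_compat; lra).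
  assert (Hu : 0 < u) by (unfold u; lra).
  set (mu := exp (ln u / c)) in *.
  assert (Hmu : 0 < mu) by apply exp_pos.
  set (lam := / mu).
  assert (Hlam : 0 < lam) by (apply Rinv_0_lt_compat; auto).
  assert (Rl : rpow lam c = / u).
  { rewrite rpow_pos by auto. unfold lam. rewrite ln_Rinv by auto. unfold mu. rewrite ln_exp.
    replace (c * - (ln u / c)) with (- ln u) by (field; lra). rewrite exp_Ropp, exp_ln; auto. }
  assert (I0e : I0 alpha u = b).
  { unfold I0. apply is_RInt_gen_unique. apply IR_gen.
    apply IR_scale with (Bint c mu) lam; auto.
    - apply exRInt_of_cont. intros y Hy. unfold Rdiv.
      apply (continuous_mult (fun y => exp (- u * rpow y (2 / alpha)))).
      apply continuous_exp_comp. apply (continuous_scal_r (- u) (fun y => rpow y (2 / alpha))). apply cont_rpow; auto.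
      apply continuous_Rinv_comp. apply (continuous_plus (fun _ => 1) (fun y => y)).
      apply continuous_const. apply continuous_id. lra.
    - intros y Hy. fold c. rewrite rpow_scale by auto. rewrite Rl. unfold Bint.
      replace (- u * (/ u * rpow y c)) with (- rpow y c) by (field; lra).
      unfold lam; field. split; lra. }
  assert (I1e : I1 alpha u = / u * a).
  { unfold I1. apply is_RInt_gen_unique. apply IR_gen.
    assert (HA' := IR_lin _ _ (/ u) 0 _ _ HA HA). rewrite Rmult_0_l, Rplus_0_r in HA'.
    apply IR_scale with (fun y => / u * Aint c mu y + 0 * Aint c mu y) lam; auto.
    - apply exRInt_of_cont. intros y Hy. unfold Rdiv.
      apply (continuous_mult (fun y => rpow y (2 / alpha) * exp (- u * rpow y (2 / alpha)))).
      apply (continuous_mult (fun y => rpow y (2 / alpha))). apply cont_rpow; auto.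
      apply continuous_exp_comp. apply (continuous_scal_r (- u) (fun y => rpow y (2 / alpha))). apply cont_rpow; auto.
      apply continuous_Rinv_comp. apply (continuous_plus (fun _ => 1) (fun y => y)).
      apply continuous_const. apply continuous_id. lra.
    - intros y Hy. fold c. rewrite rpow_scale by auto. rewrite Rl. unfold Aint.
      replace (- u * (/ u * rpow y c)) with (- rpow y c) by (field; lra).
      unfold lam; field. split; lra. }
  unfold fratio. fold u. rewrite I0e, I1e. unfold u. field. lra.
Qed.

Theorem lemma1 (alpha : R) (halpha : 2 < alpha) :
  forall s t : R, 0 < s -> s < t -> fratio alpha t t < fratio alpha s s.
Proof.
  intros s t Hs Hst.
  set (c := 2 / alpha).
  assert (Hc : 0 < c) by (unfold c; apply Rdiv_lt_0_compat; lra).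
  set (mus := exp (ln (s + s) / c)). set (mut := exp (ln (t + t) / c)).
  assert (Hmus : 0 < mus) by apply exp_pos.
  assert (Hlt : mus < mut).
  { apply exp_increasing. unfold Rdiv. apply Rmult_lt_compat_r. apply Rinv_0_lt_compat; auto.
    apply ln_increasing; lra. }
  destruct (A_exist c mus Hc Hmus) as [a1 HA1].
  destruct (B_exist c mus Hc Hmus) as [b1 HB1].
  destruct (A_exist c mut Hc ltac:(lra)) as [a2 HA2].
  destruct (B_exist c mut Hc ltac:(lra)) as [b2 HB2].
  destruct (key c mus mut a1 b1 a2 b2 Hc Hmus Hlt HA1 HB1 HA2 HB2) as [P1 [P2 [P3 [P4 K]]]].
  rewrite (repr alpha t a2 b2), (repr alpha s a1 b1); auto; try lra.
  apply Rmult_lt_reg_r with (a1 * a2). nra.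
  replace (2 * b2 / a2 * (a1 * a2)) with (2 * (a1 * b2)) by (field; lra).
  replace (2 * b1 / a1 * (a1 * a2)) with (2 * (a2 * b1)) by (field; lra). lra.
Qed.
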